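(* In the setting described in the context, suppose that for all $t=1,\dots,n$ and $j=1,\dots,m+1$ $$\mathsf E[\mathbf 1_{t,j}]=\frac{\mathsf E\big[G\,\mathbf 1_{\{G\in[\alpha_{j-1},\alpha_j)\}}\big]}{g(\alpha_j)-g(\alpha_{j-1})}\qquad(\ast)$$ and that the random vectors $(\mathbf 1_{t,j})_{j=1,\dots,m+1}$, $t=1,\dots,n$, are independent. Let $X_t=\sum_{j=1}^{m+1}\mathbf 1_{t,j}$ (the number of breached levels). Then for every $t$, $$\mathsf P(X_t\le k)=1-\frac{\mathsf E\big[G\,\mathbf 1_{\{G\in[\alpha_{m-k},\alpha_{m-k+1})\}}\big]}{g(\alpha_{m-k+1})-g(\alpha_{m-k})},\quad 0\le k\le m,\qquad \mathsf P(X_t\le m+1)=1,$$ and the random variables $X_1,\dots,X_n$ are independent.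
   Context: Let $n\ge1$ and let $L=(L_t)_{t=1}^n$ and $M=(M_t)_{t=1}^n$ be real-valued stochastic processes on a probability space $(\Omega,\mathcal F,\mathsf P)$. Assume that for each $t$ the conditional distribution function $F_{M_t\mid M_{t-1},\dots,M_1}(x\mid y_{t-1},\dots,y_1)$ is continuous in $x$. Define $q^{t-1}_{M_t}(u)=\inf\{x: F_{M_t\mid M_{t-1},\dots,M_1}(x\mid L_{t-1},\dots,L_1)\ge u\}$. A distortion function is a non-decreasing $g:[0,1]\to[0,1]$ with $g(0)=0$, $g(1)=1$. Let $g$ be a left-continuous distortion function and let $G$ be a $[0,1]$-valued random variable, independent of $L$ and $M$, with $\mathsf P(G<u)=g(u)$ for all $u\in[0,1]$. Let $0=\alpha_0<\alpha_1<\dots<\alpha_m<\alpha_{m+1}=1$ with $g(\alpha_j)-g(\alpha_{j-1})\neq0$ for all $j$. Let $(G_{t,j})_{t\le n,\,j\le m+1}$ be independent random variables, independent of $(L,M)$, with $G_{t,j}$ distributed as $G$ conditional on $G\in[\alpha_{j-1},\alpha_j)$. Set $\mathbf 1_{t,j}=1$ if $L_t>q^{t-1}_{M_t}(1-G_{t,j})$ and $\mathbf 1_{t,j}=0$ otherwise. *)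

(* Defs.v *)
From HB Require Import structures.
From mathcomp Require Import all_boot all_order all_algebra.
From mathcomp Require Import all_classical all_reals all_analysis.
Set Implicit Arguments.
Unset Strict Implicit.
Unset Printing Implicit Defensive.
Import Order.TTheory GRing.Theory Num.Theory.
Import numFieldNormedType.Exports.
Local Open Scope classical_set_scope.
Local Open Scope ring_scope.

Section defs.
Context {d : measure_display} {Omega : measurableType d} {R : realType}.

Definition mutually_independent (P : probability Omega R) (I : eqType)
    (D : set I) (F : I -> set (set Omega)) : Prop :=
  forall (J : seq I) (E : I -> set Omega), uniq J ->
    (forall i, i \in J -> D i /\ F i (E i)) ->
    P (\bigcap_(i in [set i | i \in J]) E i) = \big[*%E/1%E]_(i <- J) P (E i).

Definition sigmaR (X : Omega -> R) : set (set Omega) :=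
  [set X @^-1` B | B in [set B : set R | measurable B]].

Definition sigma_LM (n : nat) (L M : nat -> Omega -> R) : set (set Omega) :=
  <<s [set A | exists s, (1 <= s <= n)%N /\
         exists2 B : set R, measurable B & (A = L s @^-1` B \/ A = M s @^-1` B)] >>.

Definition sigma_past (M : nat -> Omega -> R) (t : nat) : set (set Omega) :=
  <<s [set A | exists s, (1 <= s < t)%N /\
         exists2 B : set R, measurable B & A = M s @^-1` B] >>.

(* Ft x y = F_{M_t | M_{t-1},...,M_1}(x | y_{t-1},...,y_1): a (regular)
   conditional distribution function of M_t given M_{t-1},...,M_1.
   The history (y_{t-1},...,y_1) is encoded as a function y : nat -> R of
   which only the coordinates 1..t-1 matter. *)
Definition is_cond_cdf (P : probability Omega R) (M : nat -> Omega -> R)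
    (t : nat) (Ft : R -> (nat -> R) -> R) : Prop :=
  (forall x (y y' : nat -> R), (forall s, (1 <= s < t)%N -> y s = y' s) ->
     Ft x y = Ft x y') /\
  (forall y : nat -> R,
     {homo (fun x => Ft x y) : a b / a <= b} /\
     (forall x, (Ft z y @[z --> x^'+] --> Ft x y)) /\
     (Ft x y @[x --> -oo] --> (0 : R)) /\ (Ft x y @[x --> +oo] --> (1 : R))) /\
  (forall x (A : set R), measurable A ->
     sigma_past M t ((fun w => Ft x (fun s => M s w)) @^-1` A)) /\
  (* defining property of the conditional probability P(M_t <= x | M_{<t}),
     tested on the generating pi-system of rectangles *)
  (forall x (B : nat -> set R), (forall s, measurable (B s)) ->
     let E := \bigcap_(s in [set s | (1 <= s < t)%N]) (M s @^-1` B s) in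
     P (E `&` [set w | M t w <= x]) = (\int[P]_(w in E) (Ft x (fun s => M s w))%:E)%E).

(* q^{t-1}_{M_t}(u) = inf {x : F(x | L_{t-1},...,L_1) >= u}, as an extended
   real (inf of the empty set is +oo). *)
Definition cond_quantile (Ft : R -> (nat -> R) -> R) (y : nat -> R) (u : R)
    : \bar R :=
  ereal_inf [set x%:E | x in [set x : R | u <= Ft x y]].

Definition breach (L : nat -> Omega -> R) (F : nat -> R -> (nat -> R) -> R)
    (Gtj : nat -> nat -> Omega -> R) (t j : nat) (w : Omega) : bool :=
  ((cond_quantile (F t) (fun s => L s w) (1 - Gtj t j w)) < (L t w)%:E)%E.

Definition breach_vec L F Gtj (m t : nat) (w : Omega) : seq bool :=
  [seq breach L F Gtj t j w | j <- iota 1 m.+1].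

Definition breach_count L F Gtj (m t : nat) (w : Omega) : nat :=
  \sum_(1 <= j < m.+2) breach L F Gtj t j w.

End defs.

Definition itv_co {R : realType} (a b : R) : set R := [set x | a <= x < b].

Definition distortion {R : realType} (g : R -> R) : Prop :=
  g 0 = 0 /\ g 1 = 1 /\
  (forall u, 0 <= u <= 1 -> 0 <= g u <= 1) /\
  (forall u v, 0 <= u -> u <= v -> v <= 1 -> g u <= g v).

(* Main.v *)
Require Import Defs.
From HB Require Import structures.
From mathcomp Require Import all_boot all_order all_algebra.
From mathcomp Require Import all_classical all_reals all_analysis.
From mathcomp Require Import lra zify.
Import Order.TTheory GRing.Theory Num.Theory.
Import numFieldNormedType.Exports.
Local Open Scope classical_set_scope.
Local Open Scope ring_scope.

Lemma sum_bool_le (f : nat -> bool) a b :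
  (\sum_(a <= j < b) (f j : nat) <= b - a)%N.
Proof.
apply: (@leq_trans (\sum_(a <= j < b) 1)%N).
  by apply: leq_sum => j _; exact: leq_b1.
by rewrite sum_nat_const_nat muln1.
Qed.

Lemma meas_sum_le d (T : measurableType d) (b : nat -> T -> bool) (s : seq nat) :
  (forall j, j \in s -> measurable [set w | b j w]) ->
  forall k, measurable [set w | (\sum_(j <- s) (b j w : nat) <= k)%N].
Proof.
elim: s => [|x s IH] hb k.
  have -> : [set w | (\sum_(j <- [::]) (b j w : nat) <= k)%N] = setT.
    by apply/seteqP; split => w //= _; rewrite big_nil.
  exact: measurableT.
have mx : measurable [set w | b x w] by apply: hb; rewrite inE eqxx.
have IH' := IH (fun j js => hb j (@mem_behead _ (x :: s) j js)).
case: k => [|k].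
  have -> : [set w | (\sum_(j <- x :: s) (b j w : nat) <= 0)%N] =
     ~` [set w | b x w] `&` [set w | (\sum_(j <- s) (b j w : nat) <= 0)%N].
    apply/seteqP; split => w /=; rewrite big_cons;
      case: (b x w) => /=.
    - by rewrite add1n.
    - by rewrite add0n => h; split.
    - by case=> /(_ isT).
    - by case=> _; rewrite add0n.
  by apply: measurableI => //; apply: measurableC.
have -> : [set w | (\sum_(j <- x :: s) (b j w : nat) <= k.+1)%N] =
   ([set w | b x w] `&` [set w | (\sum_(j <- s) (b j w : nat) <= k)%N]) `|`
   (~` [set w | b x w] `&` [set w | (\sum_(j <- s) (b j w : nat) <= k.+1)%N]).
  apply/seteqP; split => w /=; rewrite big_cons; case: (b x w) => /=.
  - by rewrite add1n => h; left.
  - by rewrite add0n => h; right.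
  - by rewrite add1n; case=> [[]|[/(_ isT)]].
  - by rewrite add0n; case=> [[]|[]].
by apply: measurableU; apply: measurableI => //; apply: measurableC.
Qed.

Theorem lemma3p2 (d : measure_display) (Omega : measurableType d)
  (R : realType) (P : probability Omega R) (n m : nat)
  (L M : nat -> Omega -> R) (F : nat -> R -> (nat -> R) -> R)
  (g : R -> R) (G : Omega -> R) (alpha : nat -> R)
  (Gtj : nat -> nat -> Omega -> R) :
  (1 <= n)%N ->
  (* L and M are real-valued processes *)
  (forall t, (1 <= t <= n)%N ->
     measurable_fun setT (L t) /\ measurable_fun setT (M t)) ->
  (* F t is the conditional d.f. of M_t given M_{t-1},...,M_1, continuous in x *)
  (forall t, (1 <= t <= n)%N -> is_cond_cdf P M t (F t)) ->
  (forall t (y : nat -> R), (1 <= t <= n)%N -> continuous (fun x => F t x y)) ->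
  (* g is a left-continuous distortion function *)
  distortion g ->
  (forall u, 0 < u <= 1 -> g x @[x --> u^'-] --> g u) ->
  (* G : [0,1]-valued, P(G < u) = g(u), independent of L and M *)
  measurable_fun setT G ->
  (forall w, 0 <= G w <= 1) ->
  (forall u, 0 <= u <= 1 -> P [set w | G w < u] = (g u)%:E) ->
  mutually_independent P setT
    (fun b : bool => if b then sigmaR G else sigma_LM n L M) ->
  (* the levels 0 = alpha_0 < ... < alpha_{m+1} = 1 *)
  alpha 0%N = 0 -> alpha m.+1 = 1 ->
  (forall j, (j <= m)%N -> alpha j < alpha j.+1) ->
  (forall j, (1 <= j <= m.+1)%N -> g (alpha j) - g (alpha j.-1) != 0) ->
  (* G_{t,j} ~ G conditional on G in [alpha_{j-1}, alpha_j) *)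
  (forall t j, (1 <= t <= n)%N -> (1 <= j <= m.+1)%N ->
     measurable_fun setT (Gtj t j) /\
     forall B : set R, measurable B ->
       P (Gtj t j @^-1` B) =
       (fine (P (G @^-1` (B `&` itv_co (alpha j.-1) (alpha j))))
        / fine (P (G @^-1` itv_co (alpha j.-1) (alpha j))))%:E) ->
  (* the G_{t,j} are independent and independent of (L, M) *)
  mutually_independent P
    (fun i : option (nat * nat) => match i with
       | None => True
       | Some (t, j) => (1 <= t <= n)%N /\ (1 <= j <= m.+1)%N end)
    (fun i => match i with
       | None => sigma_LM n L M
       | Some (t, j) => sigmaR (Gtj t j) end) ->
  (* the indicators 1_{t,j} are random variables *)
  (forall t j, (1 <= t <= n)%N -> (1 <= j <= m.+1)%N ->
     measurable [set w | breach L F Gtj t j w]) ->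
  (* assumption [star] of the paper *)
  (forall t j, (1 <= t <= n)%N -> (1 <= j <= m.+1)%N ->
     P [set w | breach L F Gtj t j w] =
     (fine (\int[P]_(w in G @^-1` itv_co (alpha j.-1) (alpha j)) (G w)%:E)%E
      / (g (alpha j) - g (alpha j.-1)))%:E) ->
  (* the vectors (1_{t,j})_{j=1..m+1}, t = 1..n, are independent *)
  mutually_independent P [set t | (1 <= t <= n)%N]
    (fun t => [set [set w | S (breach_vec L F Gtj m t w)] | S in [set: set (seq bool)]]) ->
  (forall t, (1 <= t <= n)%N ->
     (forall k, (k <= m)%N ->
        P [set w | (breach_count L F Gtj m t w <= k)%N] =
        (1 - fine (\int[P]_(w in G @^-1` itv_co (alpha (m - k)%N) (alpha (m - k)%N.+1))
                      (G w)%:E)%E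
             / (g (alpha (m - k)%N.+1) - g (alpha (m - k)%N)))%:E) /\
     P [set w | (breach_count L F Gtj m t w <= m.+1)%N] = 1%E) /\
  mutually_independent P [set t | (1 <= t <= n)%N]
    (fun t => [set breach_count L F Gtj m t @^-1` S | S in [set: set nat]]).
Proof.
move=> n1 mLM hF hFc hg hgl mG G01 hGd indG a0 am1 ainc gne hGtj indGtj mbr star indvec.
have amono : forall i j, (i <= j)%N -> (j <= m.+1)%N -> alpha i <= alpha j.
  move=> i j; elim: j => [|j IH] hij hj.
    by rewrite leqn0 in hij; rewrite (eqP hij).
  have [->|hne] := eqVneq i j.+1; first by [].
  have hij' : (i <= j)%N by move/eqP: hne; lia.
  apply: le_trans (IH hij' (ltnW hj)) (ltW (ainc j _)).
  by [].
have qmono : forall (Ft : R -> (nat -> R) -> R) y u v, u <= v ->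
   (cond_quantile Ft y u <= cond_quantile Ft y v)%E.
  move=> Ft y u v uv; apply: ereal_inf_le_tmp => _ [x hx <-]; exists x => //.
  exact: le_trans uv hx.
have itvE : forall a b : R, itv_co a b = `[a, b[%classic.
  by move=> a b; apply/seteqP; split => x; rewrite /itv_co /= in_itv /=.
have cntE : forall t w, breach_count L F Gtj m t w =
    sumn [seq nat_of_bool b | b <- breach_vec L F Gtj m t w].
  by move=> t w; rewrite /breach_count /breach_vec -map_comp sumnE big_map /index_iota subn1.
split; last first.
  move=> J E uJ hJ; apply: indvec => // i iJ.
  have [Di [S _ Ei]] := hJ i iJ; split => //.
  exists (fun s => S (sumn [seq nat_of_bool b | b <- s])) => //.
  by rewrite -Ei; apply/funext => w; rewrite /preimage /= cntE.
move=> t ht.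
pose NF j := if (1 <= j <= m.+1)%N then
   Gtj t j @^-1` (~` itv_co (alpha j.-1) (alpha j)) else set0.
have negN : P.-negligible (\bigcup_j NF j).
  apply: negligible_bigcup => j; rewrite /NF; case: ifPn => hj; last exact: negligible_set0.
  have [mGj hGj] := hGtj t j ht hj.
  have mI : measurable (~` itv_co (alpha j.-1) (alpha j)).
    by rewrite itvE; apply: measurableC; exact: measurable_itv.
  apply/negligibleP.
    by rewrite -[X in measurable X]setTI; apply: mGj.
  apply: eq_trans (hGj _ mI) _.
  by rewrite setICl preimage_set0 measure0 /= mul0r.
have [N0 [mN0 PN0 subN]] := negN.
have good : forall w, ~ N0 w -> forall j, (1 <= j <= m.+1)%N ->
    alpha j.-1 <= Gtj t j w < alpha j.
  move=> w nw j hj; apply: contra_notP nw => h; apply: subN; exists j => //.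
  by rewrite /NF hj.
have mono : forall w, ~ N0 w -> forall i j, (1 <= i)%N -> (i <= j)%N -> (j <= m.+1)%N ->
    breach L F Gtj t i w -> breach L F Gtj t j w.
  move=> w nw i j h1 hij hj; rewrite /breach => hi.
  apply: le_lt_trans hi; apply: qmono.
  suff : Gtj t i w <= Gtj t j w by lra.
  have [->|hne] := eqVneq i j; first by [].
  have /andP[_ gi] := good w nw i (ltac:(apply/andP; split; lia)).
  have /andP[gj _] := good w nw j (ltac:(apply/andP; split; lia)).
  apply: ltW; apply: lt_le_trans gi _; apply: le_trans _ gj; apply: amono.
    by move/eqP: hne; lia.
  lia.
split.
  move=> k hk.
  have [j0 ej0] : {j0 | j0 = (m - k).+1} by exists (m - k).+1.
  have hj0 : (1 <= j0 <= m.+1)%N by apply/andP; split; lia.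
  pose A := [set w | (breach_count L F Gtj m t w <= k)%N].
  pose B := ~` [set w | breach L F Gtj t j0 w].
  have mB1 := mbr t j0 ht hj0.
  have mB : measurable B by apply: measurableC.
  have mA : measurable A.
    apply: (@meas_sum_le _ _ (breach L F Gtj t) (index_iota 1 m.+2)).
    move=> j; rewrite mem_index_iota => hj; apply: mbr => //.
  have AB : A `\` N0 = B `\` N0.
    apply/seteqP; split => w [hw nw]; split => //; rewrite /A /B /= in hw *.
    - move=> hb; move: hw; rewrite /breach_count (@big_cat_nat _ _ _ j0); [|lia|lia].
      have -> : \sum_(j0 <= j < m.+2) (breach L F Gtj t j w : nat) =
                \sum_(j0 <= j < m.+2) 1%N.
        apply: eq_big_nat => j /andP[h1 h2].
        by rewrite (mono w nw j0 j _ _ _ hb) //; lia.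
      rewrite sum_nat_const_nat muln1 => h; move: (leq_trans (leq_addl _ _) h); lia.
    - move/negP: hw => hw.
      rewrite /breach_count (@big_cat_nat _ _ _ j0.+1); [|lia|lia].
      have -> : \sum_(1 <= j < j0.+1) (breach L F Gtj t j w : nat) =
                \sum_(1 <= j < j0.+1) 0%N.
        apply: eq_big_nat => j /andP[h1 h2].
        case hb: (breach L F Gtj t j w) => //.
        by move: (mono w nw j j0 h1 ltac:(lia) ltac:(lia) hb); rewrite (negbTE hw).
      rewrite sum_nat_const_nat muln0.
      apply: (@leq_trans (0 + \sum_(j0.+1 <= j < m.+2) (breach L F Gtj t j w : nat))%N).
        exact: leqnn.
      rewrite add0n; apply: leq_trans (sum_bool_le _ _ _) _; lia.
  have PA : P A = P B.
    rewrite (measureDI P mA mN0) (measureDI P mB mN0) AB.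
    rewrite (@subset_measure0 _ _ _ P (A `&` N0) N0 (measurableI _ _ mA mN0) mN0 (@subIsetr _ _ _) PN0).
    by rewrite (@subset_measure0 _ _ _ P (B `&` N0) N0 (measurableI _ _ mB mN0) mN0 (@subIsetr _ _ _) PN0).
  rewrite -/A PA /B probability_setC // star // ej0 /=.
  by rewrite EFinB.
rewrite (_ : [set w | _] = setT) ?probability_setT //.
apply/seteqP; split => w //= _.
by apply: leq_trans (sum_bool_le _ _ _) _; rewrite subn1.
Qed.
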